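(* Let $\Lambda$ be a recursive $\varepsilon$-number and $\mathcal{H}$ as in the context. For every $x\in H$ there is a formula $\varphi\in\mathbb{F}$ such that $\mathcal{H},x\Vdash\varphi$ and $\mathcal{H},y\not\Vdash\varphi$ for every $y\in x^\downarrow$.
   Context: Fix a recursive ordinal $\Lambda$ that is an $\varepsilon$-number ($\omega^\Lambda=\Lambda$). Formulas: $\mathbb{F}$ is the smallest set containing $\top$, closed under $\wedge$, and such that if $\varphi\in\mathbb{F}$, $n<\omega$, $\alpha<\Lambda$ then $\langle n^\alpha\rangle\varphi\in\mathbb{F}$. Ordinal logarithm: $\ell(0)=0$, $\ell(\alpha+\omega^\beta)=\beta$; an $\ell$-sequence is an $\omega$-sequence of ordinals $x=\langle x_0,x_1,\dots\rangle$ with $x_{i+1}\le\ell(x_i)$ for all $i$; $H$ is the set of $\ell$-sequences all of whose entries are $<\Lambda$ and some entry of which is $0$. For $n<\omega$, $xS_ny$ iff $x_m>y_m$ for all $m\le n$ and $x_i\ge y_i$ for all $i>n$. $xS_n^0y$ iff $x=y$; $xS_n^{1+\alpha}y$ iff for every $\beta<1+\alpha$ there is $z\in H$ with $xS_nz$ and $zS_n^\beta y$. The model $\mathcal{H}=\langle H,\{S_n\}_{n<\omega}\rangle$ has forcing: $x\Vdash\top$ always; $x\Vdash\varphi\wedge\psi$ iff $x\Vdash\varphi$ and $x\Vdash\psi$; $x\Vdash\langle n^\alpha\rangle\varphi$ iff there is $y\in H$ with $xS_n^\alpha y$ and $y\Vdash\varphi$. For $x\in H$, $x^\downarrow$ is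 the set of $y\in H$ such that $y_j<x_j$ for some $j<\omega$. *)

(* Defs.v *)
(* Ordinals below Lambda are modelled by a well-ordered type [carrier] whose
   order type is Lambda (every well-order is isomorphic to a unique ordinal).
   Ordinal addition and base-omega exponentiation on this segment are given
   as total operations characterised by their standard transfinite recursion
   equations; these equations determine them uniquely, and their totality
   (together with nonemptiness) says exactly that Lambda is an epsilon-number
   (omega^Lambda = Lambda). *)
From Stdlib Require Import Arith.
Set Implicit Arguments.

Section OrdDefs.
Variable T : Type.
Variable lt : T -> T -> Prop.
Definition le (a b : T) : Prop := lt a b \/ a = b.
Definition succ_of (a b : T) : Prop := lt a b /\ forall c, lt a c -> le b c.
Definition is_zero (a : T) : Prop := forall c, ~ lt c a.
Definition is_limit (l : T) : Prop := ~ is_zero l /\ forall a, ~ succ_of a l.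
Definition is_sup (P : T -> Prop) (s : T) : Prop :=
  (forall a, P a -> le a s) /\ (forall u, (forall a, P a -> le a u) -> le s u).
End OrdDefs.

Record EpsOrd := {
  carrier :> Type;
  olt : carrier -> carrier -> Prop;
  olt_wf : well_founded olt;
  olt_irrefl : forall a, ~ olt a a;
  olt_trans : forall a b c, olt a b -> olt b c -> olt a c;
  olt_total : forall a b, olt a b \/ a = b \/ olt b a;
  ozero : carrier;
  ozero_least : is_zero olt ozero;
  oadd : carrier -> carrier -> carrier;
  oadd_zero : forall a, oadd a ozero = a;
  oadd_succ : forall a b b', succ_of olt b b' -> succ_of olt (oadd a b) (oadd a b');
  oadd_limit : forall a l, is_limit olt l ->
      is_sup olt (fun c => exists b, olt b l /\ c = oadd a b) (oadd a l);
  oexp : carrier -> carrier;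
  oexp_zero : succ_of olt ozero (oexp ozero);
  oexp_succ : forall b b', succ_of olt b b' ->
      is_sup olt (fun c => exists n : nat,
                    c = Nat.iter n (fun x => oadd x (oexp b)) ozero) (oexp b');
  oexp_limit : forall l, is_limit olt l ->
      is_sup olt (fun c => exists b, olt b l /\ c = oexp b) (oexp l)
}.

Arguments olt {e} _ _.
Arguments oadd {e} _ _.
Arguments oexp {e} _.
Arguments ozero {e}.

Section Model.
Variable L : EpsOrd.

Definition ole (a b : L) : Prop := le olt a b.

(* ordinal logarithm: ell a b  <->  l(a) = b,
   with l(0) = 0 and l(g + omega^b) = b *)
Definition ell (a b : L) : Prop :=
  (a = ozero /\ b = ozero) \/ exists g, a = oadd g (oexp b).

Definition lseq (x : nat -> L) : Prop :=
  forall i, exists b, ell (x i) b /\ ole (x (S i)) b.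

Definition inH (x : nat -> L) : Prop := lseq x /\ exists i, x i = ozero.

Definition Srel (n : nat) (x y : nat -> L) : Prop :=
  (forall m, m <= n -> olt (y m) (x m)) /\ (forall i, n < i -> ole (y i) (x i)).

Definition Siter (n : nat) : L -> (nat -> L) -> (nat -> L) -> Prop :=
  Fix (olt_wf L) (fun _ => (nat -> L) -> (nat -> L) -> Prop)
    (fun a rec x y =>
       (a = ozero /\ x = y) \/
       (a <> ozero /\
        forall b (hb : olt b a), exists z, inH z /\ Srel n x z /\ rec b hb z y)).

Inductive formula : Type :=
| FTop : formula
| FAnd : formula -> formula -> formula
| FDia : nat -> L -> formula -> formula.

(* forcing in the model (H, {S_n}) ; x ranges over H *)
Fixpoint forces (x : nat -> L) (phi : formula) : Prop :=
  match phi with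
  | FTop => True
  | FAnd p q => forces x p /\ forces x q
  | FDia n a p => exists y, inH y /\ Siter n a x y /\ forces y p
  end.

Definition down (x y : nat -> L) : Prop := inH y /\ exists j, olt (y j) (x j).

End Model.

Arguments inH {L} _.
Arguments forces {L} _ _.
Arguments down {L} _ _.

(* Main.v *)
Require Import Defs.
From Stdlib Require Import Arith Lia Classical FunctionalExtensionality.

Section Ords.
Variable L : EpsOrd.
Implicit Types a b c d g : L.

Local Notation "a <o b" := (@olt L a b) (at level 70).
Local Notation "a <=o b" := (le (@olt L) a b) (at level 70).

Lemma lt_irr a : ~ a <o a.
Proof. exact (olt_irrefl L a). Qed.
Lemma lt_tr a b c : a <o b -> b <o c -> a <o c.
Proof. exact (olt_trans L a b c). Qed.
Lemma le_refl a : a <=o a.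
Proof. right; reflexivity. Qed.
Lemma le_lt a b c : a <=o b -> b <o c -> a <o c.
Proof. intros [H|H] H'; [eapply lt_tr; eauto | subst; auto]. Qed.
Lemma lt_le a b c : a <o b -> b <=o c -> a <o c.
Proof. intros H [H'|H']; [eapply lt_tr; eauto | subst; auto]. Qed.
Lemma le_tr a b c : a <=o b -> b <=o c -> a <=o c.
Proof. intros [H|H] H'; [left; eapply lt_le; eauto | subst; auto]. Qed.
Lemma lt_lew a b : a <o b -> a <=o b.
Proof. left; auto. Qed.
Lemma le_antisym a b : a <=o b -> b <=o a -> a = b.
Proof. intros [H|H] [H'|H']; auto. exfalso; apply (lt_irr a); eapply lt_tr; eauto. Qed.
Lemma lt_not_le a b : a <o b -> ~ b <=o a.
Proof. intros H H'. apply (lt_irr a). eapply lt_le; eauto. Qed.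
Lemma not_lt_le a b : ~ a <o b -> b <=o a.
Proof. intros H. destruct (olt_total L a b) as [H1|[H1|H1]]; [tauto|subst; apply le_refl|left; auto]. Qed.
Lemma not_le_lt a b : ~ a <=o b -> b <o a.
Proof. intros H. destruct (olt_total L a b) as [H1|[H1|H1]]; [exfalso; apply H; left; auto|subst; exfalso; apply H; apply le_refl|auto]. Qed.
Lemma not_lt_zero a : ~ a <o ozero.
Proof. apply (ozero_least L). Qed.
Lemma zero_le a : ozero <=o a.
Proof. apply not_lt_le, not_lt_zero. Qed.
Lemma le_zero a : a <=o ozero -> a = ozero.
Proof. intros H; apply le_antisym; auto using zero_le. Qed.
Lemma neq0_gt0 a : a <> ozero -> ozero <o a.
Proof. intros H. destruct (zero_le a) as [H1|H1]; auto. congruence. Qed.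

Lemma least (P : L -> Prop) a : P a -> exists m, P m /\ forall c, P c -> m <=o c.
Proof.
  intros Ha. apply NNPP; intro Hn.
  assert (forall a, ~ P a) as Hall.
  { intro x. induction x as [x IH] using (well_founded_ind (olt_wf L)).
    intro Px. apply Hn. exists x. split; auto. intros c Pc.
    apply not_lt_le. intro Hc. exact (IH c Hc Pc). }
  exact (Hall a Ha).
Qed.

Lemma classify c : c = ozero \/ (exists c', succ_of olt c' c) \/ is_limit olt c.
Proof.
  destruct (classic (c = ozero)) as [H|H]; [left; auto|].
  destruct (classic (exists c', succ_of olt c' c)) as [H'|H']; [right; left; auto|].
  right; right. split.
  - intro Hz. apply (Hz ozero). apply neq0_gt0; auto.
  - intros a Ha. apply H'. eauto.
Qed.

Definition osucc a := oadd a (oexp (@ozero L)).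
Lemma succ_osucc a : succ_of olt a (osucc a).
Proof.
  pose proof (oadd_succ L a (oexp_zero L)) as H.
  rewrite oadd_zero in H. exact H.
Qed.
Lemma succ_le a s c : succ_of olt a s -> a <o c -> s <=o c.
Proof. intros [_ H] Hc; auto. Qed.
Lemma succ_lt a s : succ_of olt a s -> a <o s.
Proof. intros [H _]; auto. Qed.
Lemma succ_uniq a s1 s2 : succ_of olt a s1 -> succ_of olt a s2 -> s1 = s2.
Proof.
  intros H1 H2. apply le_antisym; eapply succ_le; eauto using succ_lt.
Qed.
Lemma lt_succ_le b c' c : succ_of olt c' c -> b <o c -> b <=o c'.
Proof.
  intros Hs Hb. apply not_lt_le. intro H. apply (lt_not_le _ _ Hb). eapply succ_le; eauto.
Qed.
Lemma limit_between b l : is_limit olt l -> b <o l -> osucc b <o l.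
Proof.
  intros [Hz Hs] Hb. destruct (succ_le _ _ _ (succ_osucc b) Hb) as [H|H]; auto.
  exfalso. apply (Hs b). rewrite <- H. apply succ_osucc.
Qed.
Lemma limit_pos l : is_limit olt l -> ozero <o l.
Proof.
  intros [Hz _]. apply neq0_gt0. intro H; subst. apply Hz. apply (ozero_least L).
Qed.
Lemma sup_le (P : L -> Prop) s u : is_sup olt P s -> (forall a, P a -> a <=o u) -> s <=o u.
Proof. intros [_ H]; auto. Qed.
Lemma sup_ub (P : L -> Prop) s a : is_sup olt P s -> P a -> a <=o s.
Proof. intros [H _]; auto. Qed.
Lemma sup_uniq (P : L -> Prop) s1 s2 : is_sup olt P s1 -> is_sup olt P s2 -> s1 = s2.
Proof.
  intros H1 H2. apply le_antisym; eapply sup_le; eauto; intros; eapply sup_ub; eauto.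
Qed.
Lemma sup_below (P : L -> Prop) s d : is_sup olt P s -> d <o s -> exists p, P p /\ d <o p.
Proof.
  intros Hs Hd. apply NNPP; intro Hn.
  assert (s <=o d).
  { eapply sup_le; eauto. intros a Pa. apply not_lt_le. intro H. apply Hn; eauto. }
  eapply lt_not_le; eauto.
Qed.

Lemma add_mono a : forall c b, b <o c -> oadd a b <o oadd a c.
Proof.
  intro c. induction c as [c IH] using (well_founded_ind (olt_wf L)).
  intros b Hb. destruct (classify c) as [Hc|[[c' Hc]|Hc]].
  - subst. exfalso; eapply not_lt_zero; eauto.
  - pose proof (oadd_succ L a Hc) as Hs.
    destruct (lt_succ_le _ _ _ Hc Hb) as [H|H].
    + apply lt_tr with (oadd a c'). apply IH; [apply succ_lt; auto | auto]. apply succ_lt; auto.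
    + subst. apply succ_lt; auto.
  - pose proof (limit_between _ _ Hc Hb) as Hs.
    eapply lt_le. apply (IH _ Hs). apply succ_lt, succ_osucc.
    eapply sup_ub. apply oadd_limit; auto. exists (osucc b); auto.
Qed.
Lemma add_le a b c : b <=o c -> oadd a b <=o oadd a c.
Proof. intros [H|H]; [left; apply add_mono; auto | subst; apply le_refl]. Qed.

Lemma mono_ge (f : L -> L) : (forall b c, b <o c -> f b <o f c) -> forall a, a <=o f a.
Proof.
  intros Hf a. induction a as [a IH] using (well_founded_ind (olt_wf L)).
  apply not_lt_le. intro H. pose proof (IH _ H) as H1. pose proof (Hf _ _ H) as H2.
  eapply lt_not_le; eauto.
Qed.

Lemma add_ge g a : a <=o oadd g a.
Proof. apply mono_ge. intros; apply add_mono; auto. Qed.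

Lemma zero_add a : oadd ozero a = a.
Proof.
  apply le_antisym; [|apply add_ge].
  induction a as [a IH] using (well_founded_ind (olt_wf L)).
  destruct (classify a) as [Ha|[[a' Ha]|Ha]].
  - subst. rewrite oadd_zero. apply le_refl.
  - pose proof (oadd_succ L ozero Ha) as Hs.
    eapply succ_le; eauto. eapply le_lt. apply IH. apply succ_lt; eauto. apply succ_lt; auto.
  - eapply sup_le. apply oadd_limit; auto. intros x [b [Hb ->]].
    left. eapply le_lt; eauto.
Qed.

Lemma exp_mono : forall c b, b <o c -> oexp b <o oexp c.
Proof.
  intro c. induction c as [c IH] using (well_founded_ind (olt_wf L)).
  intros b Hb. destruct (classify c) as [Hc|[[c' Hc]|Hc]].
  - subst. exfalso; eapply not_lt_zero; eauto.
  - assert (Hpos : ozero <o oexp c').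
    { destruct (classic (c' = ozero)) as [H0|H0].
      - subst. apply succ_lt, oexp_zero.
      - apply lt_tr with (oexp ozero). apply succ_lt, oexp_zero. apply IH. apply succ_lt; auto.
        apply neq0_gt0; auto. }
    assert (Hlt : oexp c' <o oexp c).
    { pose proof (oexp_succ L Hc) as Hs.
      eapply lt_le; [|eapply sup_ub; [exact Hs| exists 2%nat; reflexivity]].
      simpl. rewrite zero_add. pattern (oexp c') at 1. rewrite <- (oadd_zero L (oexp c')).
      apply add_mono; auto. }
    destruct (lt_succ_le _ _ _ Hc Hb) as [H|H].
    + eapply lt_tr; [|exact Hlt]. apply IH; auto. apply succ_lt; auto.
    + subst; auto.
  - pose proof (limit_between _ _ Hc Hb) as Hs.
    eapply lt_le. apply (IH _ Hs). apply succ_lt, succ_osucc.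
    eapply sup_ub. apply oexp_limit; auto. exists (osucc b); auto.
Qed.
Lemma exp_le b c : b <=o c -> oexp b <=o oexp c.
Proof. intros [H|H]; [left; apply exp_mono; auto | subst; apply le_refl]. Qed.
Lemma exp_pos b : ozero <o oexp b.
Proof.
  destruct (classic (b = ozero)) as [H|H].
  - subst. apply succ_lt, oexp_zero.
  - eapply lt_tr. apply succ_lt, oexp_zero. apply exp_mono. apply neq0_gt0; auto.
Qed.
Lemma exp_ge b : b <=o oexp b.
Proof. apply mono_ge. intros; apply exp_mono; auto. Qed.

Lemma add_assoc a b : forall c, oadd (oadd a b) c = oadd a (oadd b c).
Proof.
  intro c. induction c as [c IH] using (well_founded_ind (olt_wf L)).
  destruct (classify c) as [Hc|[[c' Hc]|Hc]].
  - subst. rewrite !oadd_zero. reflexivity.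
  - pose proof (oadd_succ L (oadd a b) Hc) as H1.
    pose proof (oadd_succ L a (oadd_succ L b Hc)) as H2.
    rewrite IH in H1 by (apply succ_lt; auto). eapply succ_uniq; eauto.
  - assert (Hbl : is_limit olt (oadd b c)).
    { split.
      - intro Hz. apply (Hz b). pattern b at 1; rewrite <- (oadd_zero L b).
        apply add_mono, limit_pos; auto.
      - intros d Hd. destruct (sup_below _ _ _ (oadd_limit L b Hc) (succ_lt _ _ Hd))
          as [p [[c' [Hc' ->]] Hdp]].
        pose proof (succ_le _ _ _ Hd Hdp) as H1.
        eapply lt_not_le; [|exact H1]. apply add_mono; auto. }
    eapply sup_uniq. apply oadd_limit; auto. split.
    + intros x [c' [Hc' ->]]. rewrite IH by auto. apply add_le. left; apply add_mono; auto.
    + intros u Hu. eapply sup_le. apply oadd_limit; auto. intros x [d [Hd ->]].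
      destruct (sup_below _ _ _ (oadd_limit L b Hc) Hd) as [p [[c' [Hc' ->]] Hdp]].
      left. eapply lt_le. apply add_mono; exact Hdp. rewrite <- IH by auto.
      apply Hu. eauto.
Qed.

Lemma add_sub a c : a <=o c -> exists r, oadd a r = c.
Proof.
  intros Hac. destruct (least (fun r => c <=o oadd a r) c (add_ge a c)) as [m [Hm Hmin]].
  exists m. apply le_antisym; auto.
  destruct (classify m) as [H|[[m' H]|H]].
  - subst. rewrite oadd_zero; auto.
  - assert (oadd a m' <o c).
    { apply not_le_lt. intro H'. eapply lt_not_le; [apply (succ_lt _ _ H)|]. apply Hmin; auto. }
    eapply succ_le; eauto. apply oadd_succ; auto.
  - eapply sup_le. apply oadd_limit; auto. intros x [m' [Hm' ->]].
    left. apply not_le_lt. intro H'. eapply lt_not_le; [exact Hm'|]. apply Hmin; auto.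
Qed.

Lemma log_ex gam : gam <> ozero -> exists g b, gam = oadd g (oexp b).
Proof.
  intro Hg0.
  destruct (least (fun d => d <> ozero /\ exists g, gam = oadd g d) gam) as [d0 [[Hd0 [g Hg]] Hmin]].
  { split; auto. exists ozero. rewrite zero_add; auto. }
  assert (Hprinc : forall a, a <o d0 -> oadd a d0 = d0).
  { intros a Ha. destruct (add_sub a d0) as [r Hr]; [left; auto|].
    assert (r <> ozero) as Hr0.
    { intro E. rewrite E, oadd_zero in Hr. rewrite Hr in Ha. apply (lt_irr _ Ha). }
    assert (d0 <=o r) as H1.
    { apply Hmin. split; auto. exists (oadd g a). rewrite add_assoc, Hr; auto. }
    assert (r <=o d0) as H2. { rewrite <- Hr. apply add_ge. }
    rewrite <- (le_antisym _ _ H1 H2) in Hr. exact Hr. }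
  destruct (least (fun b => d0 <o oexp b) (osucc d0)) as [bs [Hbs Hbmin]].
  { eapply lt_le. apply succ_lt, succ_osucc. apply exp_ge. }
  destruct (classify bs) as [H|[[b H]|H]].
  - subst. exfalso. eapply lt_not_le; [exact Hbs|]. eapply succ_le. apply oexp_zero.
    apply neq0_gt0; auto.
  - assert (Hb : oexp b <=o d0).
    { apply not_lt_le. intro H'. eapply lt_not_le; [apply (succ_lt _ _ H)|]. apply Hbmin; auto. }
    destruct Hb as [Hb|Hb]; [|exists g, b; rewrite Hb; auto].
    exfalso.
    assert (Hit : forall n, oadd (Nat.iter n (fun x => oadd x (oexp b)) ozero) d0 = d0).
    { induction n; simpl. apply zero_add. rewrite add_assoc, Hprinc; auto. }
    eapply lt_not_le; [exact Hbs|]. eapply sup_le. apply oexp_succ; eauto.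
    intros x [n ->]. left.
    assert (HH : oadd (Nat.iter n (fun x => oadd x (oexp b)) ozero) ozero <o
                 oadd (Nat.iter n (fun x => oadd x (oexp b)) ozero) d0)
      by (apply add_mono, neq0_gt0; auto).
    rewrite oadd_zero, (Hit n) in HH. exact HH.
  - exfalso. eapply lt_not_le; [exact Hbs|]. eapply sup_le. apply oexp_limit; auto.
    intros x [b [Hb ->]]. apply not_lt_le. intro H'. eapply lt_not_le; [exact Hb|]. apply Hbmin; auto.
Qed.

End Ords.

Section Mod.
Variable L : EpsOrd.
Local Notation "a <o b" := (@olt L a b) (at level 70).
Local Notation "a <=o b" := (le (@olt L) a b) (at level 70).

Lemma Siter_eq n a x y : Siter L n a x y <->
  ((a = ozero /\ x = y) \/
   (a <> ozero /\ forall b, b <o a -> exists z, inH z /\ Srel L n x z /\ Siter L n b z y)).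
Proof.
  unfold Siter at 1. rewrite Fix_eq.
  - split; intros [H|[H1 H2]]; auto; right; split; auto.
  - intros a' f g Hfg.
    assert (f = g) as E.
    { apply functional_extensionality_dep; intro b.
      apply functional_extensionality_dep; intro p. apply Hfg. }
    subst; reflexivity.
Qed.

Lemma ell_zero b : ell L ozero b -> b = ozero.
Proof.
  intros [[_ H]|[g H]]; auto. exfalso.
  assert (oexp b <=o ozero) as H1 by (rewrite H; apply add_ge).
  eapply lt_not_le; [apply exp_pos|exact H1].
Qed.

Lemma zero_prop x : lseq L x -> forall i, x i = ozero -> forall j, (i <= j)%nat -> x j = ozero.
Proof.
  intros Hx i Hi j Hij. induction Hij; auto.
  destruct (Hx m) as [b [Hb Hle]]. rewrite IHHij in Hb. apply ell_zero in Hb. subst.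
  apply le_zero; auto.
Qed.

Definition zseq : nat -> L := fun _ => ozero.
Lemma zseq_H : inH zseq.
Proof.
  split. - intro i. exists ozero. split. left; auto. apply le_refl.
  - exists 0%nat; reflexivity.
Qed.

Fixpoint tow (g : L) (k : nat) : L := match k with 0 => g | S k => oexp (tow g k) end.
Definition wt (n : nat) (g : L) : nat -> L := fun i => if Nat.leb i n then tow g (n - i) else ozero.

Lemma wt_lt n g i : (i < n)%nat -> wt n g i = oexp (wt n g (S i)).
Proof.
  intro H. unfold wt. replace (Nat.leb i n) with true by (symmetry; apply Nat.leb_le; lia).
  replace (Nat.leb (S i) n) with true by (symmetry; apply Nat.leb_le; lia).
  replace (n - i)%nat with (S (n - S i)) by lia. reflexivity.
Qed.
Lemma wt_n n g : wt n g n = g.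
Proof. unfold wt. rewrite Nat.leb_refl, Nat.sub_diag. reflexivity. Qed.
Lemma wt_gt n g i : (n < i)%nat -> wt n g i = ozero.
Proof. intro H. unfold wt. replace (Nat.leb i n) with false by (symmetry; apply Nat.leb_gt; lia). reflexivity. Qed.

Lemma wt_H n g : inH (wt n g).
Proof.
  split.
  - intro i. destruct (lt_eq_lt_dec i n) as [[H|H]|H].
    + exists (wt n g (S i)). split; [|apply le_refl]. right. exists ozero.
      rewrite zero_add. apply wt_lt; auto.
    + subst. rewrite wt_n, wt_gt by lia.
      destruct (classic (g = ozero)) as [Hg|Hg].
      * exists ozero. split; [left; auto|apply le_refl].
      * destruct (log_ex _ _ Hg) as [g' [b Hb]]. exists b. split; [right; eauto|apply zero_le].
    + rewrite !wt_gt by lia. exists ozero. split; [left; auto|apply le_refl].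
  - exists (S n). apply wt_gt; lia.
Qed.

Lemma wt_S n g z : inH z -> g <o z n -> Srel L n z (wt n g).
Proof.
  intros [Hz _] Hg. split.
  - assert (forall k, (k <= n)%nat -> wt n g (n - k) <o z (n - k)) as Hk.
    { induction k; intro Hkn.
      - rewrite Nat.sub_0_r, wt_n; auto.
      - pose proof (IHk ltac:(lia)) as IH.
        replace (n - k)%nat with (S (n - S k)) in IH by lia.
        set (m := (n - S k)%nat) in *.
        rewrite wt_lt by lia.
        destruct (Hz m) as [b [[[H1 H2]|[g' H1]] Hle]].
        + subst b. exfalso. eapply not_lt_zero. eapply lt_le; eauto.
        + rewrite H1. eapply lt_le. apply exp_mono; eauto.
          eapply le_tr. apply exp_le; eauto. apply add_ge. }
    intros m Hm. replace m with (n - (n - m))%nat by lia. apply Hk; lia.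
  - intros i Hi. rewrite wt_gt by lia. apply zero_le.
Qed.

Lemma lemA n : forall be z y, Siter L n be z y -> be <=o z n.
Proof.
  intro be. induction be as [be IH] using (well_founded_ind (olt_wf L)).
  intros z y H. apply Siter_eq in H. destruct H as [[H1 H2]|[H1 H2]].
  - subst. apply zero_le.
  - apply not_lt_le. intro Hlt.
    destruct (H2 _ Hlt) as [w [Hw [[Hs _] Hit]]].
    pose proof (IH _ Hlt _ _ Hit) as H3.
    pose proof (Hs n (le_n n)) as H4.
    apply (lt_irr _ (z n)). eapply le_lt; eauto.
Qed.

Lemma lemB n : forall be, be <> ozero -> forall z, inH z -> be <=o z n -> Siter L n be z zseq.
Proof.
  intro be. induction be as [be IH] using (well_founded_ind (olt_wf L)).
  intros Hb z Hz Hle. apply Siter_eq. right. split; auto.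
  intros ga Hga. destruct (classic (ga = ozero)) as [E|E].
  - subst ga. exists zseq. split; [apply zseq_H|]. split.
    + split.
      * intros m Hm. apply neq0_gt0. intro Hzm.
        assert (z n = ozero) by (eapply zero_prop; eauto; apply Hz).
        apply Hb. apply le_zero. rewrite <- H; auto.
      * intros; apply zero_le.
    + apply Siter_eq. left; auto.
  - exists (wt n ga). split; [apply wt_H|]. split.
    + apply wt_S; auto. eapply lt_le; eauto.
    + apply IH; auto. apply wt_H. rewrite wt_n. apply le_refl.
Qed.

Fixpoint phi (x : nat -> L) (k : nat) : formula L :=
  match k with 0 => FTop L | S k => FAnd (FDia k (x k) (FTop L)) (phi x k) end.

Lemma phi_forces x : inH x -> forall k, forces x (phi x k).
Proof.
  intros Hx k. induction k; simpl; auto. split; auto.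
  destruct (classic (x k = ozero)) as [E|E].
  - exists x. split; auto. split; auto. apply Siter_eq. left; auto.
  - exists zseq. split; [apply zseq_H|]. split; auto. apply lemB; auto. apply le_refl.
Qed.

Lemma phi_sub y x k j : (j < k)%nat -> forces y (phi x k) -> forces y (FDia j (x j) (FTop L)).
Proof.
  induction k; intros Hj H; [lia|]. simpl in H. destruct H as [H1 H2].
  destruct (Nat.eq_dec j k); [subst; auto|]. apply IHk; auto; lia.
Qed.

End Mod.

Theorem theorem6p3 (L : EpsOrd) (x : nat -> L) :
  inH x ->
  exists phi : formula L,
    forces x phi /\ (forall y : nat -> L, down x y -> ~ forces y phi).
Proof.
  intros Hx. destruct Hx as [Hl [k Hk]].
  exists (phi L x k). split; [apply phi_forces; split; eauto|].
  intros y [Hy [j Hj]] Hf.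
  destruct (lt_dec j k) as [Hjk|Hjk].
  - destruct (@phi_sub L y x k j Hjk Hf) as [y' [_ [Hs _]]].
    apply lemA in Hs. eapply lt_not_le; eauto.
  - assert (x j = ozero) as E by (eapply zero_prop; eauto; lia).
    rewrite E in Hj. eapply not_lt_zero; eauto.
Qed.
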